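(* Let $k\ge 1$ and $n\ge 100k$ be integers, and let $G$ be an $n$-vertex bipartite graph with minimum degree $\delta(G)>\frac{2}{5}n$. Let $u,v$ be two distinct vertices of $G$. Then: (a) if $v$ and $u$ lie in the same part of the bipartition, then for each $h\in\{3,5,\dots,2k+1\}$ there is a path from $v$ to $u$ with exactly $h$ vertices; (b) if $v$ and $u$ lie in different parts, then for each $s\in\{4,6,\dots,2k+2\}$ there is a path from $v$ to $u$ with exactly $s$ vertices.
   Context: The order of a path is its number of vertices. *)

(* Defs.v *)
From mathcomp Require Import all_boot.
Set Implicit Arguments. Unset Strict Implicit. Unset Printing Implicit Defensive.

Definition simple_graph (T : finType) (e : rel T) : Prop :=
  symmetric e /\ irreflexive e.

Definition deg (T : finType) (e : rel T) (x : T) : nat := #|[set y | e x y]|.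

Definition bipartition (T : finType) (e : rel T) (A : {set T}) : Prop :=
  forall x y, e x y -> (x \in A) != (y \in A).

(* p is a path from x to y: a sequence of distinct vertices, starting at x,
   ending at y, consecutive vertices adjacent. Its order is size p. *)
Definition is_path (T : finType) (e : rel T) (x y : T) (p : seq T) : Prop :=
  [/\ uniq p, head x p = x, last x p = y, p != [::] & sorted e p].

(* Main.v *)
Require Import Defs.
From mathcomp Require Import all_boot.
From mathcomp Require Import zify.

Ltac slia := repeat match goal with
  | H : is_true (_ <= _) |- _ => revert H
  | H : @eq nat _ _ |- _ => revert H
  end; repeat match goal with H : _ |- _ => clear H end; intros; lia.

Set Implicit Arguments.
Lemma pick_avoid (T : finType) (S : {set T}) (q : seq T) :
  size q < #|S| -> exists2 y, y \in S & y \notin q.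
Proof.
move=> H; case: (boolP [exists y in S, y \notin q]) => [/exists_inP[y Hy Hq]|]; first by exists y.
move/exists_inPn => Hall.
have Hsub : S \subset q by apply/subsetP => y /Hall; rewrite negbK.
by move: H; rewrite ltnNge (leq_trans (subset_leq_card Hsub) (card_size q)).
Qed.

Lemma common_big (T : finType) (e : rel T) (A : {set T}) :
  simple_graph e -> bipartition e A -> (forall x, 5 * deg e x > 2 * #|T|) ->
  forall a b, (a \in A) = (b \in A) ->
  #|T| < 5 * #|[set y | e a y] :&: [set y | e b y]|.
Proof.
move=> [sym irr] bip Hdeg a b Hab.
have [w] : exists2 w, w \in [set y | e a y] & w \notin [::].
  apply: pick_avoid; have := Hdeg a; rewrite /deg /=; slia.
rewrite inE => Haw _.
have I0 : ([set y | e a y] :|: [set y | e b y]) :&: [set y | e w y] = set0.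
  apply/setP => y; rewrite !inE; apply/negP => /andP[/orP[H|H] H'].
  - have := bip _ _ H; have := bip _ _ H'; have := bip _ _ Haw.
    by case: (a \in A); case: (w \in A); case: (y \in A).
  - have := bip _ _ H; have := bip _ _ H'; have := bip _ _ Haw; rewrite -?Hab.
    by case: (a \in A); case: (w \in A); case: (y \in A).
have := cardsU [set y | e a y] [set y | e b y].
have := cardsU ([set y | e a y] :|: [set y | e b y]) [set y | e w y].
rewrite I0 cards0.
have := max_card (([set y | e a y] :|: [set y | e b y]) :|: [set y | e w y]).
have := Hdeg a; have := Hdeg b; have := Hdeg w; rewrite /deg. slia.
Qed.

Lemma chain (T : finType) (e : rel T) (A : {set T}) (B : nat) :
  simple_graph e -> bipartition e A ->
  (forall a b, (a \in A) = (b \in A) ->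
     B < #|[set y | e a y] :&: [set y | e b y]|) ->
  forall m (F : seq T) (a b : T), 1 <= m -> size F + 2 * m <= B -> a != b ->
    (a \in A) = (b \in A) -> a \notin F -> b \notin F ->
  exists p, [/\ is_path e a b p, size p = 2 * m + 1 & all (fun z => z \notin F) p].
Proof.
move=> [sym irr] bip H1 m; elim: m => [//|m IH] F a b Hm HB ab Hab aF bF.
case: m IH Hm HB => [|m] IH _ HB.
- have [y] : exists2 y, y \in [set y | e a y] :&: [set y | e b y] & y \notin F.
    apply: pick_avoid; have := H1 a b Hab; slia.
  rewrite !inE => /andP[Hay Hby] yF.
  have ay : a != y by apply: contraTneq Hay => ->; rewrite irr.
  have yb : y != b by apply: contraTneq Hby => ->; rewrite irr.
  exists [:: a; y; b]; split => //=.
  + split => //=; first by rewrite !inE negb_or ab ay yb.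
    by rewrite Hay sym Hby.
  + by rewrite aF yF bF.
have [y0] : exists2 w, w \in [set y | e a y] & w \notin [::].
  apply: pick_avoid; have := H1 a a erefl; rewrite setIid /=; slia.
rewrite inE => Hay0 _.
have [x] : exists2 w, w \in [set y | e y0 y] & w \notin a :: b :: F.
  apply: pick_avoid; have := H1 y0 y0 erefl; rewrite setIid /=; slia.
rewrite inE !in_cons !negb_or => Hyx /and3P[xa xb xF].
have Hxa : (x \in A) = (a \in A).
  have := bip _ _ Hay0; have := bip _ _ Hyx.
  by case: (a \in A); case: (x \in A); case: (y0 \in A).
have HB' : size (a :: F) + 2 * m.+1 <= B by rewrite /=; slia.
have Hxb : (x \in A) = (b \in A) by rewrite Hxa.
have xaF : x \notin a :: F by rewrite in_cons negb_or xa.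
have baF : b \notin a :: F by rewrite in_cons negb_or eq_sym ab.
have [q [[uq hq lq nq sq] szq aq]] := IH (a :: F) x b (erefl _) HB' xb Hxb xaF baF.
have [y] : exists2 y, y \in [set y | e a y] :&: [set y | e x y] & y \notin q ++ F.
  apply: pick_avoid; have := H1 a x (esym Hxa); rewrite size_cat; slia.
rewrite !inE mem_cat negb_or => /andP[Hay Hxy] /andP[yq yF].
have ay : a != y by apply: contraTneq Hay => ->; rewrite irr.
case: q uq hq lq nq sq szq aq yq => [//|x' q] uq hq lq _ sq szq aq yq.
move: hq => /= hq; subst x'.
have aq' : a \notin x :: q.
  by apply/negP => /(allP aq); rewrite in_cons eqxx.
have aqF : all (fun z => z \notin F) (x :: q).
  by apply: sub_all aq => z /=; rewrite in_cons negb_or; case/andP.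
exists [:: a, y, x & q]; split.
- split => //.
  + by rewrite cons_uniq in_cons negb_or ay aq' cons_uniq yq uq.
  + by rewrite /= Hay sym Hxy; move: sq => /= ->.
- by move: szq => /= szq; rewrite /= szq; slia.
- by rewrite /= aF yF; move: aqF => /= ->.
Qed.

Theorem lemma3p1 (T : finType) (e : rel T) (A : {set T}) (k : nat) :
  simple_graph e -> bipartition e A ->
  1 <= k -> 100 * k <= #|T| ->
  (forall x : T, 5 * deg e x > 2 * #|T|) ->
  forall u v : T, u != v ->
    ((v \in A) = (u \in A) ->
       forall h, odd h -> 3 <= h <= 2 * k + 1 ->
         exists p : seq T, is_path e v u p /\ size p = h) /\
    ((v \in A) != (u \in A) ->
       forall s, ~~ odd s -> 4 <= s <= 2 * k + 2 ->
         exists p : seq T, is_path e v u p /\ size p = s).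
Proof.
move=> Hs bip k1 kn Hdeg u v uv.
have H1 : forall a b, (a \in A) = (b \in A) ->
    2 * k + 3 < #|[set y | e a y] :&: [set y | e b y]|.
  move=> a b Hab; have := common_big Hs bip Hdeg Hab; slia.
have [sym irr] := Hs.
split.
- move=> Hvu h oh /andP[h3 hk].
  have hm : h = 2 * h./2 + 1 by have := odd_double_half h; rewrite oh -mul2n; slia.
  have m1 : 1 <= h./2 by slia.
  have mB : size (@nil T) + 2 * h./2 <= 2 * k + 3 by rewrite /=; slia.
  have vu : v != u by rewrite eq_sym.
  have [p [Hp Hsz _]] := @chain T e A (2 * k + 3) Hs bip H1 (h./2) [::] v u m1 mB vu Hvu erefl erefl.
  by exists p; split => //; rewrite Hsz -hm.
- move=> Hvu s es /andP[s4 sk].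
  have hm : s = 2 * s./2 by have := odd_double_half s; rewrite (negbTE es) -mul2n; slia.
  have [x] : exists2 w, w \in [set y | e u y] & w \notin [:: v].
    apply: pick_avoid; have := H1 u u erefl; rewrite setIid /=; slia.
  rewrite inE in_cons orbF => Hux xv.
  have Hxv : (v \in A) = (x \in A).
    have := bip _ _ Hux; move: Hvu.
    by case: (v \in A); case: (x \in A); case: (u \in A).
  have xu : x != u by apply: contraTneq Hux => ->; rewrite irr.
  have m1 : 1 <= s./2 - 1 by slia.
  have mB : size [:: u] + 2 * (s./2 - 1) <= 2 * k + 3 by rewrite /=; slia.
  have vx : v != x by rewrite eq_sym.
  have vu' : v \notin [:: u] by rewrite in_cons orbF eq_sym.
  have xu' : x \notin [:: u] by rewrite in_cons orbF.
  have [p [[up hp lp np sp] Hsz ap]] := @chain T e A (2 * k + 3) Hs bip H1 (s./2 - 1) [:: u] v x m1 mB vx Hxv vu' xu'.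
  have up' : u \notin p by apply/negP => /(allP ap); rewrite in_cons eqxx.
  case: p up hp lp np sp Hsz ap up' => [//|v' p] up /= hp lp _ sp Hsz _ up'.
  subst v'.
  exists (v :: rcons p u); split.
  + split => //=.
    * by rewrite -cons_uniq -rcons_cons rcons_uniq up' up.
    * by rewrite last_rcons.
    * by rewrite rcons_path sp lp sym.
  + rewrite /= size_rcons; move: Hsz => /= Hsz; slia.
Qed.
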